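(* Let $X$ be a linearly ordered set. A linear basis of the free $\mathrm{BiCom}$-algebra $\mathrm{BiCom}\langle X\rangle$ consists of the words $x_1*\dots*x_t*(y_1\odot\dots\odot y_k)$, with $t\ge 0$, $k\ge 1$, $x_i,y_j\in X$, and $x_1\le\dots\le x_t\le y_1\le\dots\le y_k$ (for $t=0$ the word is $y_1\odot\dots\odot y_k$; bracketings inside $*$-products and $\odot$-products are irrelevant by associativity).
   Context: A $\mathrm{BiCom}$-algebra is a vector space with two bilinear operations $*$ and $\odot$, each associative and commutative, satisfying $(x\odot y)*z=x\odot(y*z)$. *)

(* Defs.v *)
From HB Require Import structures.
From mathcomp Require Import all_boot all_order all_algebra.
Set Implicit Arguments. Unset Strict Implicit. Unset Printing Implicit Defensive.
Import Order.TTheory GRing.Theory Num.Theory.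
Local Open Scope ring_scope.

Record bicom (K : fieldType) (A : lmodType K) := BiCom {
  bstar : A -> A -> A;
  bodot : A -> A -> A;
  bstar_linl : forall (a : K) (x y z : A), bstar (a *: x + y) z = a *: bstar x z + bstar y z;
  bstar_linr : forall (a : K) (x y z : A), bstar z (a *: x + y) = a *: bstar z x + bstar z y;
  bodot_linl : forall (a : K) (x y z : A), bodot (a *: x + y) z = a *: bodot x z + bodot y z;
  bodot_linr : forall (a : K) (x y z : A), bodot z (a *: x + y) = a *: bodot z x + bodot z y;
  bstarA : forall x y z : A, bstar (bstar x y) z = bstar x (bstar y z);
  bstarC : forall x y : A, bstar x y = bstar y x;
  bodotA : forall x y z : A, bodot (bodot x y) z = bodot x (bodot y z);
  bodotC : forall x y : A, bodot x y = bodot y x;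
  bmixed : forall x y z : A, bstar (bodot x y) z = bodot x (bstar y z)
}.

Inductive bterm (X : Type) : Type :=
| BVar of X
| BStar of bterm X & bterm X
| BOdot of bterm X & bterm X.

Fixpoint beval (K : fieldType) (A : lmodType K) (B : bicom A) (X : Type)
    (f : X -> A) (t : bterm X) : A :=
  match t with
  | BVar x => f x
  | BStar u v => bstar B (beval B f u) (beval B f v)
  | BOdot u v => bodot B (beval B f u) (beval B f v)
  end.

Fixpoint odot_word (X : Type) (y : X) (ys : seq X) : bterm X :=
  match ys with
  | [::] => BVar y
  | y' :: ys' => BOdot (BVar y) (odot_word y' ys')
  end.

(* x_1 * ... * x_t * (y_1 odot ... odot y_k). A basis word is indexed by the
   triple (xs, y, ys) with ys the tail of the odot-part. *)
Definition basis_word (X : Type) (w : seq X * X * seq X) : bterm X :=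
  foldr (fun x t => BStar (BVar x) t) (odot_word w.1.2 w.2) w.1.1.

Definition basis_ok (d : Order.disp_t) (X : orderType d) (w : seq X * X * seq X) : bool :=
  sorted (fun a b : X => (a <= b)%O) (w.1.1 ++ w.1.2 :: w.2).

Definition beval_comb (K : fieldType) (A : lmodType K) (B : bicom A)
    (d : Order.disp_t) (X : orderType d) (f : X -> A)
    (c : seq (K * (seq X * X * seq X))) : A :=
  \sum_(p <- c) p.1 *: beval B f (basis_word p.2).

(* Main.v *)
Require Import Defs.
From HB Require Import structures.
From mathcomp Require Import all_boot all_order all_algebra.
From mathcomp Require Import mpoly.
From mathcomp Require Import ring.
From mathcomp Require Import zify.
Set Implicit Arguments. Unset Strict Implicit. Unset Printing Implicit Defensive.
Import Order.TTheory GRing.Theory.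
Local Open Scope ring_scope.

Lemma bLL (K : fieldType) (A : lmodType K) (B : bicom A) (a b z : A) :
  bstar B a (bstar B b z) = bstar B b (bstar B a z).
Proof. by rewrite -!bstarA (bstarC B a b). Qed.
Lemma bMM (K : fieldType) (A : lmodType K) (B : bicom A) (a b z : A) :
  bodot B a (bodot B b z) = bodot B b (bodot B a z).
Proof. by rewrite -!bodotA (bodotC B a b). Qed.
Lemma bML (K : fieldType) (A : lmodType K) (B : bicom A) (a b z : A) :
  bodot B a (bstar B b z) = bstar B b (bodot B a z).
Proof. by rewrite (bstarC B b z) -bmixed bstarC. Qed.
Lemma bMLs (K : fieldType) (A : lmodType K) (B : bicom A) (a b z : A) :
  bodot B a (bstar B b z) = bodot B b (bstar B a z).
Proof. by rewrite -!bmixed (bodotC B a b). Qed.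
Lemma bodotL (K : fieldType) (A : lmodType K) (B : bicom A) (s p q : A) :
  bodot B (bstar B s p) q = bstar B s (bodot B p q).
Proof. by rewrite bodotC (bstarC B s p) -bmixed bstarC bodotC. Qed.

Fixpoint ins (d : Order.disp_t) (X : orderType d) (a : X) (T : seq X) : seq X :=
  match T with
  | [::] => [:: a]
  | s :: ss => if (a <= s)%O then a :: s :: ss else s :: ins a ss
  end.

Lemma size_ins d (X : orderType d) (a : X) T : size (ins a T) = (size T).+1.
Proof. by elim: T => //= s ss IH; case: ifP => //=; rewrite IH. Qed.

Lemma path_ins d (X : orderType d) (a x : X) ss :
  (x <= a)%O -> path (fun a b : X => (a <= b)%O) x ss ->
  path (fun a b : X => (a <= b)%O) x (ins a ss).
Proof.
elim: ss x => [|s ss IH] x xa /=; first by rewrite xa.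
move=> /andP[xs ps]; case: ifP => [as_|]; first by rewrite /= xa as_ ps.
move=> /negbT; rewrite -ltNge => /ltW sa; rewrite /= xs; exact: IH.
Qed.

Lemma sorted_ins d (X : orderType d) (a : X) T :
  sorted (fun a b : X => (a <= b)%O) T -> sorted (fun a b : X => (a <= b)%O) (ins a T).
Proof.
case: T => [|s ss] //= ps; case: ifP => [as_|]; first by rewrite /= as_ ps.
move=> /negbT; rewrite -ltNge => /ltW sa; exact: path_ins.
Qed.

Fixpoint wd (X : Type) (s : X) (ss : seq X) (j : nat) : seq X * X * seq X :=
  match ss with
  | [::] => ([::], s, [::])
  | s' :: ss' => if (j < size ss)%N then let w := wd s' ss' j in (s :: w.1.1, w.1.2, w.2)
                else ([::], s, ss)
  end.

Lemma wd_all (X : Type) (s : X) ss : wd s ss (size ss) = ([::], s, ss).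
Proof. by case: ss => //= s' ss; rewrite ltnn. Qed.

Lemma flat_wd (X : Type) (s : X) ss j :
  (wd s ss j).1.1 ++ (wd s ss j).1.2 :: (wd s ss j).2 = s :: ss.
Proof. elim: ss s => [|s' ss IH] s //=; case: ifP => //= _; by rewrite IH. Qed.

Definition Cv (K : fieldType) (A : lmodType K) (B : bicom A) (X : Type) (f : X -> A)
  (T : seq X) (j : nat) : A :=
  match T with [::] => 0 | s :: ss => beval B f (basis_word (wd s ss j)) end.

Lemma Cv1 (K : fieldType) (A : lmodType K) (B : bicom A) (X : Type) (f : X -> A) s j :
  Cv B f [:: s] j = f s.
Proof. by []. Qed.

Lemma CvL (K : fieldType) (A : lmodType K) (B : bicom A) (X : Type) (f : X -> A) s ss j :
  (j < size ss)%N -> Cv B f (s :: ss) j = bstar B (f s) (Cv B f ss j).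
Proof. by case: ss => //= s' ss ->. Qed.

Lemma CvM (K : fieldType) (A : lmodType K) (B : bicom A) (X : Type) (f : X -> A) s ss j :
  j = size ss -> (0 < size ss)%N -> Cv B f (s :: ss) j = bodot B (f s) (Cv B f ss j.-1).
Proof.
case: ss => //= s' ss -> _; rewrite ltnn /= wd_all; by [].
Qed.

Lemma CvG (K : fieldType) (A : lmodType K) (B : bicom A) (X : Type) (f : X -> A) R a j :
  (j.+1 < size R)%N -> bodot B a (Cv B f R j) = bstar B a (Cv B f R j.+1).
Proof.
elim: R j => [|s ss IH] j // lt.
have ljS : (j < size ss)%N by [].
rewrite CvL //.
case: (ltnP j.+1 (size ss)) => h.
  by rewrite CvL // bML IH // bLL.
have e : j.+1 = size ss by apply/eqP; rewrite eqn_leq h andbT; exact: lt.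
rewrite CvM //; last by rewrite -e.
by rewrite /= bMLs bML.
Qed.

Lemma ins_cons d (X : orderType d) (a s : X) ss :
  ins a (s :: ss) = if (a <= s)%O then a :: s :: ss else s :: ins a ss.
Proof. by []. Qed.

Lemma INSM (K : fieldType) (A : lmodType K) (B : bicom A) d (X : orderType d) (f : X -> A)
  a T j : (0 < size T)%N -> (j < size T)%N ->
  bodot B (f a) (Cv B f T j) = Cv B f (ins a T) j.+1.
Proof.
elim: T j => [|s ss IH] j // _ lj; rewrite ins_cons.
case: ifP => [as_|_].
  case: (ltnP j.+1 (size (s :: ss))) => h.
    by rewrite (CvL B f a) // CvG.
  have e : j.+1 = size (s :: ss) by apply/eqP; rewrite eqn_leq h andbT.
  by rewrite (CvM B f a) // -e.
case: ss IH lj => [|s' ss] IH lj.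
  by rewrite /= bodotC.
case: (ltnP j (size (s' :: ss))) => h.
  rewrite CvL // bML IH // CvL //.
  by rewrite size_ins.
have e : j = size (s' :: ss) by apply/eqP; rewrite eqn_leq h andbT.
rewrite CvM // bMM; case: j e lj h => [|j] e lj h; first by [].
rewrite IH // (CvM B f s) //; first by rewrite size_ins -e.
by rewrite size_ins.
Qed.

Lemma INSL (K : fieldType) (A : lmodType K) (B : bicom A) d (X : orderType d) (f : X -> A)
  a T j : (0 < size T)%N -> (j < size T)%N ->
  bstar B (f a) (Cv B f T j) = Cv B f (ins a T) j.
Proof.
elim: T j => [|s ss IH] j // _ lj; rewrite ins_cons.
case: ifP => [as_|_].
  by rewrite (CvL B f a).
case: ss IH lj => [|s' ss] IH lj.
  by case: j lj => // _; rewrite /= bstarC.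
case: (ltnP j (size (s' :: ss))) => h.
  rewrite CvL // bLL IH // CvL //.
  by rewrite size_ins ltnW.
have e : j = size (s' :: ss) by apply/eqP; rewrite eqn_leq h andbT.
rewrite CvM // -bML; case: j e lj h => [|j] e lj h; first by [].
rewrite IH // (CvL B f s); last by rewrite size_ins -e.
by rewrite CvG // size_ins -e.
Qed.

Lemma size_foldr_ins d (X : orderType d) (T1 T2 : seq X) :
  size (foldr (@ins d X) T2 T1) = (size T1 + size T2)%N.
Proof. by elim: T1 => //= a T1 IH; rewrite size_ins IH. Qed.

Lemma sorted_foldr_ins d (X : orderType d) (T1 T2 : seq X) :
  sorted (fun a b : X => (a <= b)%O) T2 ->
  sorted (fun a b : X => (a <= b)%O) (foldr (@ins d X) T2 T1).
Proof. by elim: T1 => //= a T1 IH s2; apply: sorted_ins; apply: IH. Qed.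

Lemma STAR (K : fieldType) (A : lmodType K) (B : bicom A) d (X : orderType d) (f : X -> A)
  T1 T2 j1 j2 : (0 < size T1)%N -> (j1 < size T1)%N -> (0 < size T2)%N -> (j2 < size T2)%N ->
  bstar B (Cv B f T1 j1) (Cv B f T2 j2) = Cv B f (foldr (@ins d X) T2 T1) (j1 + j2).
Proof.
move=> _ + p2 l2; elim: T1 j1 => [|s ss IH] j1 // lj; rewrite [foldr _ _ (_ :: _)]/=.
case: ss IH lj => [|s' ss] IH lj.
  by case: j1 lj => // _; rewrite Cv1 INSL.
case: (ltnP j1 (size (s' :: ss))) => h.
  rewrite CvL // bstarA IH // INSL // size_foldr_ins.
    by rewrite addn_gt0.
  by rewrite -addnS leq_add // ltnW.
have e : j1 = size (s' :: ss) by apply/eqP; rewrite eqn_leq h andbT.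
rewrite CvM // bmixed; case: j1 e lj h => [|j1] e lj h; first by [].
rewrite IH // INSM ?size_foldr_ins ?addn_gt0 //.
by rewrite -e /= addSn ltnS leq_add2l ltnW.
Qed.

Lemma ODOT (K : fieldType) (A : lmodType K) (B : bicom A) d (X : orderType d) (f : X -> A)
  T1 T2 j1 j2 : (0 < size T1)%N -> (j1 < size T1)%N -> (0 < size T2)%N -> (j2 < size T2)%N ->
  bodot B (Cv B f T1 j1) (Cv B f T2 j2) = Cv B f (foldr (@ins d X) T2 T1) (j1 + j2).+1.
Proof.
move=> _ + p2 l2; elim: T1 j1 => [|s ss IH] j1 // lj; rewrite [foldr _ _ (_ :: _)]/=.
case: ss IH lj => [|s' ss] IH lj.
  by case: j1 lj => // _; rewrite Cv1 INSM.
case: (ltnP j1 (size (s' :: ss))) => h.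
  rewrite CvL // bodotL IH // INSL // size_foldr_ins.
    by rewrite addn_gt0.
  by rewrite -addnS -addSn leq_add.
have e : j1 = size (s' :: ss) by apply/eqP; rewrite eqn_leq h andbT.
rewrite CvM // bodotA; case: j1 e lj h => [|j1] e lj h; first by [].
rewrite IH // INSM ?size_foldr_ins ?addn_gt0 //.
by rewrite -e /= addSn ltnS ltn_add2l.
Qed.

Fixpoint nf d (X : orderType d) (t : bterm X) : seq X * nat :=
  match t with
  | BVar x => ([:: x], 0%N)
  | BStar u v => (foldr (@ins d X) (nf v).1 (nf u).1, ((nf u).2 + (nf v).2)%N)
  | BOdot u v => (foldr (@ins d X) (nf v).1 (nf u).1, ((nf u).2 + (nf v).2).+1)
  end.

Lemma nf_inv d (X : orderType d) (t : bterm X) :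
  [/\ (0 < size (nf t).1)%N, ((nf t).2 < size (nf t).1)%N &
      sorted (fun a b : X => (a <= b)%O) (nf t).1].
Proof.
elim: t => [x|u [pu lu su] v [pv lv sv]|u [pu lu su] v [pv lv sv]] //=;
  rewrite size_foldr_ins addn_gt0 pu sorted_foldr_ins //; split => //.
  by rewrite -addnS leq_add // ltnW.
by rewrite -addnS -addSn leq_add.
Qed.

Lemma nf_eval (K : fieldType) (A : lmodType K) (B : bicom A) d (X : orderType d) (f : X -> A)
  (t : bterm X) : beval B f t = Cv B f (nf t).1 (nf t).2.
Proof.
elim: t => [x|u IHu v IHv|u IHu v IHv] //=;
  have [pu lu _] := nf_inv u; have [pv lv _] := nf_inv v; rewrite IHu IHv.
  exact: STAR.
exact: ODOT.
Qed.

Definition tword d (X : orderType d) (t : bterm X) : seq X * X * seq X :=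
  match (nf t).1 with
  | [::] => ([::], (fix fl (t : bterm X) : X := match t with BVar x => x | BStar u _ => fl u | BOdot u _ => fl u end) t, [::])
  | s :: ss => wd s ss (nf t).2
  end.

Lemma span (K : fieldType) d (X : orderType d) (t : bterm X) :
  exists c : seq (K * (seq X * X * seq X)),
      all (@basis_ok d X) (map snd c) /\
      forall (A : lmodType K) (B : bicom A) (f : X -> A),
        beval B f t = beval_comb B f c.
Proof.
exists [:: (1, tword t)]; split.
  rewrite /= andbT /basis_ok /tword.
  have [p _ s] := nf_inv t; move: p s; case: (nf t).1 => // s ss _.
  by rewrite flat_wd.
move=> A B f; rewrite /beval_comb big_cons big_nil addr0 scale1r nf_eval /tword.
have [p _ _] := nf_inv t; move: p; case: (nf t).1 => //.
Qed.

Definition modelB (K : fieldType) (n : nat) : bicom {mpoly K[n.+1]}.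
refine (@BiCom K {mpoly K[n.+1]} ( *%R) (fun p q => 'X_ord_max * (p * q)) _ _ _ _ _ _ _ _ _).
- by move=> a x y z; rewrite mulrDl -scalerAl.
- by move=> a x y z; rewrite mulrDr -scalerAr.
- by move=> a x y z; rewrite mulrDl mulrDr -scalerAl -scalerAr.
- by move=> a x y z; rewrite mulrDr mulrDr -scalerAr -scalerAr.
- by move=> x y z; rewrite mulrA.
- by move=> x y; rewrite mulrC.
- by move=> x y z; ring.
- by move=> x y; rewrite [x * y]mulrC.
- by move=> x y z; ring.
Defined.

Definition ix d (X : orderType d) (s : seq X) (a : X) : 'I_(size s).+1 := inord (index a s).

Definition monom d (X : orderType d) (s : seq X) (S : seq X) (j : nat) : 'X_{1..(size s).+1} :=
  [multinom (count (fun a => ix s a == i) S + (i == ord_max) * j)%N | i < (size s).+1].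

Lemma mw_odot (K : fieldType) d (X : orderType d) (s : seq X) (y : X) ys :
  beval (modelB K (size s)) (fun a => 'X_(ix s a)) (odot_word y ys) = 'X_[monom s (y :: ys) (size ys)].
Proof.
elim: ys y => [|y' ys IH] y /=.
  by congr mpolyX; apply/mnmP => i; rewrite mnm1E mnmE /= muln0 !addn0.
rewrite IH -!mpolyXD; congr mpolyX; apply/mnmP=> i; rewrite !mnmDE !mnm1E !mnmE /=.
rewrite (eq_sym ord_max) mulnS; lia.
Qed.

Definition flat (X : Type) (w : seq X * X * seq X) := w.1.1 ++ w.1.2 :: w.2.

Lemma mw_word (K : fieldType) d (X : orderType d) (s : seq X) w :
  beval (modelB K (size s)) (fun a => 'X_(ix s a)) (basis_word w) = 'X_[monom s (flat w) (size w.2)].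
Proof.
case: w => [[xs y] ys]; rewrite /basis_word /flat /=.
elim: xs => [|x xs IH] /=; first exact: mw_odot.
rewrite IH -mpolyXD; congr mpolyX; apply/mnmP=> i; rewrite !mnmDE !mnm1E !mnmE /=; lia.
Qed.

Lemma ix_val d (X : orderType d) (s : seq X) a : a \in s -> (ix s a : nat) = index a s.
Proof. by move=> ha; rewrite /ix inordK // ltnS ltnW // index_mem. Qed.

Lemma ix_eq d (X : orderType d) (s : seq X) a b :
  a \in s -> b \in s -> (ix s a == ix s b) = (a == b).
Proof.
move=> ha hb; apply/eqP/eqP => [h|->//].
have := congr1 val h; rewrite /= !ix_val // => e.
by rewrite -(nth_index a ha) -(nth_index a hb) e.
Qed.

Lemma ix_max d (X : orderType d) (s : seq X) a : a \in s -> (ix s a == ord_max) = false.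
Proof.
move=> ha; apply/negbTE/eqP => h; have := congr1 val h.
rewrite /= ix_val // => e.
by move: ha; rewrite -index_mem e ltnn.
Qed.
Lemma monom_inj d (X : orderType d) (s : seq X) w1 w2 :
  basis_ok w1 -> basis_ok w2 -> all (mem s) (flat w1) -> all (mem s) (flat w2) ->
  monom s (flat w1) (size w1.2) = monom s (flat w2) (size w2.2) -> w1 = w2.
Proof.
move=> o1 o2 /allP a1 /allP a2 /mnmP E.
have cnt0 w : {subset flat w <= s} -> count (fun a => ix s a == ord_max) (flat w) = 0%N.
  move=> hw; rewrite (@eq_in_count _ _ pred0) ?count_pred0 // => a ha.
  by rewrite /= ix_max // hw.
have hj : size w1.2 = size w2.2.
  by have := E ord_max; rewrite !mnmE eqxx !mul1n !cnt0.
have hS : flat w1 = flat w2.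
  apply: (sorted_eq (@le_trans _ X) (@le_anti _ X)) o1 o2 _.
  apply/allP => x; rewrite mem_cat => hx.
  have xs : x \in s by case/orP: hx => [/a1|/a2].
  have := E (ix s x); rewrite !mnmE ix_max // !mul0n !addn0.
  rewrite (@eq_in_count _ _ (pred1 x) (flat w1)); last first.
    by move=> a ha; rewrite /= ix_eq //; exact: a1.
  rewrite (@eq_in_count _ _ (pred1 x) (flat w2)); last first.
    by move=> a ha; rewrite /= ix_eq //; exact: a2.
  by move=> e; apply/eqP; exact: e.
move: hS hj; case: w1 {o1 a1 E} => [[xs1 y1] ys1]; case: w2 {o2 a2} => [[xs2 y2] ys2].
rewrite /flat /= => hS hj.
have hx : size xs1 = size xs2.
  by have := congr1 size hS; rewrite !size_cat /= hj => /addIn.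
by move/eqP: hS; rewrite eqseq_cat // => /andP[/eqP-> /eqP[-> ->]].
Qed.

Lemma sum_pick (K : fieldType) (T : eqType) (c : seq (K * T)) q :
  uniq (map snd c) -> q \in c -> \sum_(p <- c) p.1 * (p.2 == q.2)%:R = q.1.
Proof.
elim: c => [|p c IH] //= /andP[nin u]; rewrite inE big_cons => /orP[/eqP->|qc].
  rewrite eqxx mulr1 big1_seq ?addr0 // => p' /andP[_ p'c].
  case: eqP => [e|]; last by rewrite mulr0.
  by move: nin; rewrite -e map_f.
rewrite IH //; case: eqP => [e|_]; last by rewrite mulr0 add0r.
by move: nin; rewrite e map_f.
Qed.

Lemma indep (K : fieldType) d (X : orderType d) (c : seq (K * (seq X * X * seq X))) :
  uniq (map snd c) -> all (@basis_ok d X) (map snd c) ->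
  (forall (A : lmodType K) (B : bicom A) (f : X -> A), beval_comb B f c = 0) ->
  all (fun p => p.1 == 0) c.
Proof.
move=> u /allP ok H; set s := flatten [seq flat p.2 | p <- c].
have inS p : p \in c -> all (mem s) (flat p.2).
  move=> pc; apply/allP => x hx; apply/flattenP; exists (flat p.2) => //.
  exact: (map_f (fun p => flat p.2)).
have okc p : p \in c -> basis_ok p.2 by move=> pc; apply: ok; apply: map_f.
have := H _ (modelB K (size s)) (fun a => 'X_(ix s a)).
rewrite /beval_comb; under eq_bigr do rewrite mw_word.
move=> E; apply/allP => q qc.
have := congr1 (mcoeff (monom s (flat q.2) (size q.2.2))) E.
rewrite raddf_sum mcoeff0.
rewrite (eq_big_seq (fun p => p.1 * (p.2 == q.2)%:R)); last first.
  move=> p pc; rewrite /= mcoeffZ mcoeffX; congr (_ * (nat_of_bool _)%:R).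
  apply/eqP/eqP => [|->//]; apply: monom_inj; by [apply: okc | apply: inS].
by rewrite sum_pick // => ->.
Qed.

Theorem mainTheorem3 (K : fieldType) (d : Order.disp_t) (X : orderType d) :
  (* spanning: every element of the free BiCom-algebra is a combination of basis words *)
  (forall t : bterm X, exists c : seq (K * (seq X * X * seq X)),
      all (@basis_ok d X) (map snd c) /\
      forall (A : lmodType K) (B : bicom A) (f : X -> A),
        beval B f t = beval_comb B f c)
  /\
  (* linear independence in the free BiCom-algebra *)
  (forall c : seq (K * (seq X * X * seq X)),
      uniq (map snd c) -> all (@basis_ok d X) (map snd c) ->
      (forall (A : lmodType K) (B : bicom A) (f : X -> A), beval_comb B f c = 0) ->
      all (fun p => p.1 == 0) c).
Proof.
split; [exact: span | exact: indep].
Qed.
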